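(* Let $I=(u..v)$ and $J=(c..d)$ be two conserved intervals of $\mathcal{P}$ with $u<c\leq v<d$. Then $(u..c)$, $(c..v)$, $(v..d)$ and $(u..d)$ are conserved intervals of $\mathcal{P}$.
   Context: Let $n\geq 2$ and let $\mathcal{P}=\{P_1,\ldots,P_K\}$ be signed permutations of $\{1,\ldots,n\}$: each $P_k$ is an ordering of $1,\ldots,n$ in which each element carries a sign $+$ or $-$. Assume $P_1=(+1,+2,\ldots,+n)$ and that every $P_k$ has first element $+1$ and last element $+n$. For integers $i\leq j$ write $(i..j)=\{i,\ldots,j\}$. A conserved interval of $\mathcal{P}$ is either a singleton, or a set $(a..c)$ with $a<c$ which (ignoring signs) occupies consecutive positions in every $P_k$ and which, in every $P_k$, has either $+a$ at its left end and $+c$ at its right end, or $-c$ at its left end and $-a$ at its right end. *)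

(* Defs.v *)
From mathcomp Require Import all_boot.
Set Implicit Arguments. Unset Strict Implicit. Unset Printing Implicit Defensive.

(* A signed element: (x, true) is +x, (x, false) is -x. *)
Definition selt := (nat * bool)%type.
Definition sperm := seq selt.

Definition is_signed_perm (n : nat) (P : sperm) : Prop :=
  perm_eq (map fst P) (iota 1 n).

Definition id_sperm (n : nat) : sperm := [seq (i, true) | i <- iota 1 n].

Definition conserved_in (P : sperm) (a c : nat) : Prop :=
  exists i : nat,
    let w := take (c - a + 1) (drop i P) in
    perm_eq (map fst w) (iota a (c - a + 1)) /\
    ((nth (0, true) w 0 = (a, true) /\ nth (0, true) w (c - a) = (c, true)) \/
     (nth (0, true) w 0 = (c, false) /\ nth (0, true) w (c - a) = (a, false))).

Definition conserved (n : nat) (Ps : seq sperm) (a c : nat) : Prop :=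
  (a = c /\ 1 <= a <= n) \/
  (a < c /\ forall P, P \in Ps -> conserved_in P a c).

(* Main.v *)
Require Import Defs.
From mathcomp Require Import all_boot.
From mathcomp Require Import zify.
Set Implicit Arguments. Unset Strict Implicit.

Definition V (s : seq nat) j := nth 0 s j.
Lemma V_nth (s : seq nat) j : @nth (Equality.sort nat) 0 s j = V s j.
Proof. by []. Qed.

Definition Win (s : seq nat) i a c :=
  i + (c - a) < size s /\
  (forall j, i <= j <= i + (c - a) -> a <= V s j <= c) /\
  (forall x, a <= x <= c -> exists j, i <= j <= i + (c - a) /\ V s j = x).

Lemma Vinj (s : seq nat) j k : uniq s -> j < size s -> k < size s -> V s j = V s k -> j = k.
Proof. move=> U hj hk E; apply/eqP; rewrite -(nth_uniq 0 hj hk U); exact/eqP. Qed.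

Lemma perm_win s i a c : uniq s -> a <= c ->
  perm_eq (take (c - a + 1) (drop i s)) (iota a (c - a + 1)) <-> Win s i a c.
Proof.
move=> U ac; set w := take _ _; split.
- move=> P; have Sz := perm_size P; rewrite size_iota /w size_take size_drop in Sz.
  have hs : i + (c - a) < size s by move: Sz; case: ifP; lia.
  have hw : size w = c - a + 1 by rewrite (perm_size P) size_iota.
  split => //; split.
  + move=> j hj; have hk : j - i < size w by lia.
    have := mem_nth 0 hk; rewrite (perm_mem P) mem_iota /w nth_take; last lia.
    rewrite nth_drop (_ : i + (j - i) = j) ?V_nth; lia.
  + move=> x hx; have : x \in w by rewrite (perm_mem P) mem_iota; lia.
    case/(nthP 0) => k hk <-; exists (i + k); split; first lia.
    by rewrite /w /V nth_take ?nth_drop //; lia.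
- case=> hs [H1 H2]; apply: uniq_perm; first by rewrite take_uniq ?drop_uniq.
    exact: iota_uniq.
  have hw : size w = c - a + 1 by rewrite /w size_take size_drop; case: ltnP; move: hs; rewrite -!(size_map id s) ?map_id; lia.
  move=> x; rewrite mem_iota; apply/idP/idP.
  + case/(nthP 0) => k hk <-; rewrite /w nth_take; last lia.
    rewrite nth_drop V_nth; have := H1 (i + k); lia.
  + move=> hx; have [j [hj <-]] := H2 x ltac:(lia).
    have hk : j - i < size w by lia.
    have := mem_nth 0 hk; rewrite /w nth_take; last lia.
    by rewrite nth_drop (_ : i + (j - i) = j) //; lia.
Qed.

Definition fs (P : sperm) : seq nat := map fst P.
Definition CIf (P : sperm) a c i := Win (fs P) i a c /\
  nth (0,true) P i = (a,true) /\ nth (0,true) P (i + (c-a)) = (c,true).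
Definition CIr (P : sperm) a c i := Win (fs P) i a c /\
  nth (0,true) P i = (c,false) /\ nth (0,true) P (i + (c-a)) = (a,false).
Definition CI P a c := exists i, CIf P a c i \/ CIr P a c i.

Lemma ci_conv P a c : uniq (fs P) -> a <= c -> conserved_in P a c <-> CI P a c.
Proof.
move=> U ac; rewrite /conserved_in /CI /CIf /CIr.
have E i k : k <= c - a -> nth (0, true) (take (c - a + 1) (drop i P)) k = nth (0,true) P (i + k).
  by move=> hk; rewrite nth_take ?nth_drop //; lia.
split; case=> i H; exists i; move: H; rewrite map_take map_drop perm_win // !E ?addn0 //. all: rewrite /fs; tauto.
Qed.

Definition flip (e : selt) : selt := (e.1, ~~ e.2).
Definition rflip (P : sperm) : sperm := rev (map flip P).

Lemma fs_rflip P : fs (rflip P) = rev (fs P).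
Proof. by rewrite /fs /rflip map_rev -map_comp. Qed.

Lemma size_rflip P : size (rflip P) = size P.
Proof. by rewrite size_rev size_map. Qed.

Lemma nth_rflip P k : k < size P -> nth (0,true) (rflip P) k = flip (nth (0,true) P (size P - k.+1)).
Proof.
move=> hk; rewrite /rflip nth_rev ?size_map //.
rewrite (nth_map (0,true)) //; move: hk; rewrite /selt; lia.
Qed.

Lemma rflipK P : rflip (rflip P) = P.
Proof.
rewrite /rflip map_rev revK -map_comp (@eq_map _ _ _ id); first exact: map_id.
by case=> x b /=; rewrite /flip /= negbK.
Qed.

Lemma size_fs P : size (fs P) = size P.
Proof. by rewrite size_map. Qed.

Lemma Win_rev s i a c : Win s i a c -> Win (rev s) (size s - (i + (c-a)).+1) a c.
Proof.
case=> hs [H1 H2]; rewrite /Win size_rev; split; first lia.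
split.
- move=> j hj; have hj' : j < size (rev s) by rewrite size_rev; lia.
  rewrite /V nth_rev //; have := H1 (size s - j.+1); rewrite /V; lia.
- move=> x hx; have [j [hj <-]] := H2 x hx; exists (size s - j.+1); split; first lia.
  have hj' : size s - j.+1 < size (rev s) by rewrite size_rev; lia.
  rewrite /V nth_rev //.
  rewrite (_ : size s - (size s - j.+1).+1 = j) //; try lia. by move: hj'; rewrite size_rev.
Qed.

Lemma CI_rflip P a c : CI P a c -> CI (rflip P) a c.
Proof.
case=> i H.
have W : Win (fs P) i a c by case: H => -[].
have hs := W.1; rewrite size_fs in hs.
exists (size P - (i + (c - a)).+1).
have W' : Win (fs (rflip P)) (size P - (i + (c - a)).+1) a c.
  by rewrite fs_rflip -(size_fs P); exact: Win_rev.
rewrite /CIf /CIr !nth_rflip; try lia.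
rewrite (_ : size P - (size P - (i + (c - a)).+1).+1 = i + (c - a)); last lia.
rewrite (_ : size P - (size P - (i + (c - a)).+1 + (c - a)).+1 = i); last lia.
by case: H => -[_ [-> ->]]; [right | left].
Qed.

Lemma CI_rflip_iff P a c : CI (rflip P) a c <-> CI P a c.
Proof. split; last exact: CI_rflip. by move/CI_rflip; rewrite rflipK. Qed.

Lemma count_eq (s : seq nat) i L a M : uniq s -> i + L <= size s ->
  (forall j, i <= j < i + L -> a <= V s j < a + M) ->
  (forall x, a <= x < a + M -> exists j, i <= j < i + L /\ V s j = x) -> L = M.
Proof.
move=> U hs H1 H2.
have Ut : uniq (map (V s) (iota i L)).
  rewrite map_inj_in_uniq ?iota_uniq // => x y; rewrite !mem_iota => hx hy.
  by apply: Vinj => //; lia.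
have P : perm_eq (map (V s) (iota i L)) (iota a M).
  apply: uniq_perm => // [|x]; first exact: iota_uniq.
  rewrite mem_iota; apply/idP/idP.
  - by case/mapP => j; rewrite mem_iota => hj ->; apply: H1.
  - move=> hx; have [j [hj <-]] := H2 x hx; apply: map_f; rewrite mem_iota; lia.
by have := perm_size P; rewrite size_map !size_iota.
Qed.

Lemma Vfs P j : j < size P -> V (fs P) j = (nth (0,true) P j).1.
Proof. by move=> hj; rewrite /V /fs (nth_map (0,true)). Qed.

Lemma core_fwd P u v c d p : uniq (fs P) -> u < c -> c <= v -> v < d ->
  CIf P u v p -> CI P c d ->
  CI P u c /\ (c < v -> CI P c v) /\ CI P v d /\ CI P u d.
Proof.
move=> U uc cv vd [[hsI [I1 I2]] [Ep Epl]] [q HJ].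
set s := fs P in U hsI I1 I2 *.
have hN : size s = size P by rewrite size_fs.
have Vp : V s p = u by rewrite Vfs ?Ep //; lia.
have Vpl : V s (p + (v - u)) = v by rewrite Vfs ?Epl //; lia.
have [hsJ [J1 J2]] : Win s q c d by case: HJ => -[].
have [j0 [hj0 Vj0]] := J2 v ltac:(lia).
have ej : j0 = p + (v - u) by apply: (@Vinj s _ _ U); [lia|lia|rewrite Vj0 Vpl].
subst j0.
have pq : p < q.
  case: (ltnP p q) => // qp; have := J1 p; rewrite Vp; lia.
have [Eqc Eqd] : nth (0,true) P q = (c,true) /\ nth (0,true) P (q + (d - c)) = (d,true).
  case: HJ => -[_ [E1 E2]] //.
  have := I1 q ltac:(lia); rewrite Vfs ?E1 /=; lia.
have Vq : V s q = c by rewrite Vfs ?Eqc //; lia.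
have Vql : V s (q + (d - c)) = d by rewrite Vfs ?Eqd //; lia.
have F1 : forall j, p <= j < q -> u <= V s j < c.
  move=> j hj; have := I1 j ltac:(lia); case: (ltnP (V s j) c) => hc h; first lia.
  have [k [hk Vk]] := J2 (V s j) ltac:(lia).
  have : k = j by apply: (@Vinj s _ _ U) => //; lia.
  lia.
have F2 : forall x, u <= x < c -> exists j, p <= j < q /\ V s j = x.
  move=> x hx; have [j [hj Vj]] := I2 x ltac:(lia); exists j; split => //.
  case: (ltnP j q) => jq; first lia.
  have := J1 j ltac:(lia); lia.
have hq : q - p = c - u.
  apply: (@count_eq s p (q - p) u (c - u) U); first lia.
    by move=> j hj; have := F1 j ltac:(lia); lia.
  by move=> x hx; have [j [hj Vj]] := F2 x ltac:(lia); exists j; split => //; lia.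
split; [|split; [|split]].
- exists p; left; split; last by rewrite Ep (_ : p + (c - u) = q) //; lia.
  rewrite -/s; split; first lia. split.
  + move=> j hj; case: (ltnP j q) => jq; first by have := F1 j; lia.
    by rewrite (_ : j = q) ?Vq //; lia.
  + move=> x hx; case: (ltnP x c) => xc.
    * by have [j [hj Vj]] := F2 x ltac:(lia); exists j; split => //; lia.
    * by exists q; split; [lia | rewrite Vq; lia].
- move=> cv'; exists q; left; split; last by rewrite Eqc (_ : q + (v - c) = p + (v - u)) //; lia.
  rewrite -/s; split; first lia. split.
  + move=> j hj; have := I1 j ltac:(lia); have := J1 j ltac:(lia); lia.
  + move=> x hx; have [j [hj Vj]] := I2 x ltac:(lia); exists j; split => //.
    case: (ltnP j q) => jq; last lia.
    have := F1 j ltac:(lia); lia.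
- exists (p + (v - u)); left; split; last first.
    by rewrite Epl (_ : p + (v - u) + (d - v) = q + (d - c)) //; lia.
  rewrite -/s; split; first lia. split.
  + move=> j hj; have := J1 j ltac:(lia); case: (ltnP (V s j) v) => hv h; last lia.
    have [k [hk Vk]] := I2 (V s j) ltac:(lia).
    have ekj : k = j by apply: (@Vinj s _ _ U) => //; lia.
    subst k; have ej : j = p + (v - u) by lia.
    move: hv; rewrite ej Vpl; lia.
  + move=> x hx; have [j [hj Vj]] := J2 x ltac:(lia); exists j; split => //.
    case: (ltnP j (p + (v - u))) => jl; last lia.
    have := I1 j ltac:(lia); rewrite Vj => hx'.
    have : j = p + (v - u) by apply: (@Vinj s _ _ U); [lia|lia|rewrite Vj Vpl; lia].
    lia.
- exists p; left; split; last by rewrite Ep (_ : p + (d - u) = q + (d - c)) //; lia.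
  rewrite -/s; split; first lia. split.
  + move=> j hj; case: (leqP j (p + (v - u))) => jl.
    * have := I1 j ltac:(lia); lia.
    * have := J1 j ltac:(lia); lia.
  + move=> x hx; case: (leqP x v) => xv.
    * have [j [hj Vj]] := I2 x ltac:(lia); exists j; split => //; lia.
    * have [j [hj Vj]] := J2 x ltac:(lia); exists j; split => //; lia.
Qed.

Lemma CIr_rflip P a c i : CIr P a c i -> CIf (rflip P) a c (size P - (i + (c - a)).+1).
Proof.
move=> H.
have W : Win (fs P) i a c by case: H.
have hs := W.1; rewrite size_fs in hs.
have W' : Win (fs (rflip P)) (size P - (i + (c - a)).+1) a c.
  by rewrite fs_rflip -(size_fs P); exact: Win_rev.
rewrite /CIf !nth_rflip; try lia.
rewrite (_ : size P - (size P - (i + (c - a)).+1).+1 = i + (c - a)); last lia.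
rewrite (_ : size P - (size P - (i + (c - a)).+1 + (c - a)).+1 = i); last lia.
by case: H => _ [-> ->].
Qed.

Lemma core P u v c d : uniq (fs P) -> u < c -> c <= v -> v < d ->
  CI P u v -> CI P c d ->
  CI P u c /\ (c < v -> CI P c v) /\ CI P v d /\ CI P u d.
Proof.
move=> U uc cv vd [p [Hf|Hr]] HJ; first exact: core_fwd Hf HJ.
have U' : uniq (fs (rflip P)) by rewrite fs_rflip rev_uniq.
have := core_fwd U' uc cv vd (CIr_rflip Hr) (CI_rflip HJ).
by rewrite !CI_rflip_iff.
Qed.

Lemma uniq_fs n P : is_signed_perm n P -> uniq (fs P).
Proof. by move=> H; rewrite /fs (perm_uniq H) iota_uniq. Qed.

Theorem lemma5 (n : nat) (Ps : seq sperm) (u v c d : nat) :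
  2 <= n ->
  (forall P, P \in id_sperm n :: Ps -> is_signed_perm n P) ->
  (forall P, P \in id_sperm n :: Ps ->
     head (0, true) P = (1, true) /\ last (0, true) P = (n, true)) ->
  conserved n (id_sperm n :: Ps) u v ->
  conserved n (id_sperm n :: Ps) c d ->
  u < c -> c <= v -> v < d ->
  conserved n (id_sperm n :: Ps) u c /\
  conserved n (id_sperm n :: Ps) c v /\
  conserved n (id_sperm n :: Ps) v d /\
  conserved n (id_sperm n :: Ps) u d.
Proof.
move=> n2 Hp _ [[e _]|[_ Huv]]; first lia.
move=> [[e _]|[_ Hcd]]; first lia.
move=> uc cv vd.
have K P : P \in id_sperm n :: Ps ->
  CI P u c /\ (c < v -> CI P c v) /\ CI P v d /\ CI P u d.
  move=> HP; have U := uniq_fs (Hp P HP).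
  apply: core => //.
    by apply/ci_conv => //; [lia|exact: Huv].
  by apply/ci_conv => //; [lia|exact: Hcd].
split; [|split; [|split]].
- right; split => // P HP; apply/ci_conv; [exact: uniq_fs (Hp P HP)|lia|].
  exact: (K P HP).1.
- case: (ltnP c v) => cv'.
  + right; split => // P HP; apply/ci_conv; [exact: uniq_fs (Hp P HP)|lia|].
    exact: (K P HP).2.1.
  + left; split; first lia.
    have HP : id_sperm n \in id_sperm n :: Ps by rewrite inE eqxx.
    have U := uniq_fs (Hp _ HP).
    have := Hcd _ HP; rewrite ci_conv //; last lia.
    case=> q H; have [hs [_ J2]] : Win (fs (id_sperm n)) q c d by case: H => -[].
    have [j [hj Vj]] := J2 c ltac:(lia).
    have hj' : j < size (fs (id_sperm n)) by lia.
    have := mem_nth 0 hj'; rewrite (perm_mem (Hp _ HP)) mem_iota V_nth Vj; lia.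
- right; split => // P HP; apply/ci_conv; [exact: uniq_fs (Hp P HP)|lia|].
  exact: (K P HP).2.2.1.
- right; split; first lia. move=> P HP; apply/ci_conv; [exact: uniq_fs (Hp P HP)|lia|].
  exact: (K P HP).2.2.2.
Qed.
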